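(* Let $n\ge 3$ and let $W_n$ be the web graph. Then its $b$-chromatic number satisfies $$\varphi(W_n)=\begin{cases}4 & \text{if } n=3,4,\\ 5 & \text{if } n\ge 5.\end{cases}$$
   Context: The web graph $W_n$ is obtained from the prism graph $C_n\Box P_2$ (two $n$-cycles $v_1\dots v_n$ and $u_1\dots u_n$ with $u_i$ adjacent to $v_i$ for each $i$) by attaching one pendant vertex to each vertex of one of the two cycles (the outer cycle $u_1\dots u_n$). A $b$-colouring of a graph $G$ with $k$ colours is a proper colouring $c:V(G)\to\{1,\dots,k\}$ such that for every colour $i$ there is a vertex of colour $i$ adjacent to a vertex of every colour $j\ne i$, $1\le j\le k$. The $b$-chromatic number $\varphi(G)$ is the maximum $k$ for which $G$ has a $b$-colouring with $k$ colours. *)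

(* Defs.v *)
From mathcomp Require Import all_boot.
Set Implicit Arguments. Unset Strict Implicit. Unset Printing Implicit Defensive.

(* A (simple) graph on a finite vertex type T is given by its adjacency
   relation [adj]; for the web graph it is symmetric and irreflexive. *)

Definition proper_colouring (T : finType) (adj : rel T) (k : nat)
  (c : T -> 'I_k) : Prop :=
  forall x y, adj x y -> c x != c y.

Definition b_colouring (T : finType) (adj : rel T) (k : nat)
  (c : T -> 'I_k) : Prop :=
  proper_colouring adj c /\
  forall i : 'I_k, exists x : T, c x = i /\
    forall j : 'I_k, j != i -> exists y : T, adj x y /\ c y = j.

Definition has_b_colouring (T : finType) (adj : rel T) (k : nat) : Prop :=
  exists c : T -> 'I_k, b_colouring adj c.

Definition b_chromatic_number_is (T : finType) (adj : rel T) (k : nat) : Prop :=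
  has_b_colouring adj k /\ forall k', has_b_colouring adj k' -> k' <= k.

(* Vertices (l, i) with l : 'I_3, i : 'I_n:
   l = 0 : inner cycle v_i;  l = 1 : outer cycle u_i;  l = 2 : pendant at u_i. *)
Definition cyc_adj (n : nat) (i j : 'I_n) : bool :=
  (j == (i.+1 %% n) :> nat) || (i == (j.+1 %% n) :> nat).

Definition web_adj (n : nat) : rel ('I_3 * 'I_n) :=
  fun x y =>
    let: (l1, i) := x in let: (l2, j) := y in
    [|| [&& l1 == l2, (l1 : nat) < 2 & cyc_adj i j],
        [&& i == j, (l1 : nat) == 0 & (l2 : nat) == 1],
        [&& i == j, (l1 : nat) == 1 & (l2 : nat) == 0],
        [&& i == j, (l1 : nat) == 1 & (l2 : nat) == 2]
      | [&& i == j, (l1 : nat) == 2 & (l2 : nat) == 1]].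

(* Main.v *)
Require Import Defs.
From mathcomp Require Import all_boot.
Set Implicit Arguments. Unset Strict Implicit. Unset Printing Implicit Defensive.

Definition ordo n i : option 'I_n :=
  (if i < n as b return (i < n = b -> option 'I_n) then fun H => Some (Ordinal H) else fun _ => None) erefl.

Lemma ordoE n (x : 'I_n) : ordo n x = Some x.
Proof.
rewrite /ordo; case: x => m Hm /=.
move: (@erefl _ (m < n)); case: {2 3}(m < n) => H; last by rewrite Hm in H.
by congr Some; apply: val_inj.
Qed.

Definition allord n : seq 'I_n := pmap (ordo n) (iota 0 n).

Lemma allordP n (x : 'I_n) : x \in allord n.
Proof. by rewrite mem_pmap; apply/mapP; exists (val x); [rewrite mem_iota /= | rewrite ordoE]. Qed.

Definition allv n : seq ('I_3 * 'I_n) := [seq (a, b) | a <- allord 3, b <- allord n].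

Lemma allvP n (x : 'I_3 * 'I_n) : x \in allv n.
Proof. by case: x => a b; apply/allpairsP; exists (a, b); rewrite !allordP. Qed.

Definition b_colb n (k : nat) (c : 'I_3 * 'I_n -> 'I_k) : bool :=
  all (fun x => all (fun y => web_adj x y ==> (c x != c y)) (allv n)) (allv n) &&
  all (fun i => has (fun x => (c x == i) && all (fun j => (j != i) ==> has (fun y => web_adj x y && (c y == j)) (allv n)) (allord k)) (allv n)) (allord k).

Lemma b_colbP n (k : nat) (c : 'I_3 * 'I_n -> 'I_k) :
  b_colb c -> b_colouring (@web_adj n) c.
Proof.
case/andP=> /allP H1 /allP H2; split.
  by move=> x y Hxy; have /allP := H1 x (allvP _); move/(_ y (allvP _)); rewrite Hxy.
move=> i; have /hasP [x _ /andP [/eqP cx /allP Hx]] := H2 i (allordP _).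
exists x; split => // j ji.
have := Hx j (allordP _); rewrite ji /= => /hasP [y _ /andP [a /eqP b]].
by exists y.
Qed.

Definition tcol (k : nat) (L : seq (seq nat)) (n : nat) (x : 'I_3 * 'I_n) : 'I_k.+1 :=
  odflt ord0 (ordo k.+1 (nth 0 (nth [::] L x.1) x.2)).

Lemma c3 : has_b_colouring (@web_adj 3) 4.
Proof. exists (tcol 3 [:: [:: 1;3;0]; [:: 3;1;2]; [:: 0;0;0]] (n:=3)). apply: b_colbP. vm_compute. reflexivity. Qed.
Lemma c6 : has_b_colouring (@web_adj 6) 5.
Proof. exists (tcol 4 [:: [:: 3;4;0;1;0;1]; [:: 0;1;2;3;4;2]; [:: 4;3;4;0;1;0]] (n:=6)). apply: b_colbP. vm_compute. reflexivity. Qed.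

Definition L n (x : 'I_3 * 'I_n) : seq (nat * nat) :=
  let l := val x.1 in let i := val x.2 in
  if l == 0 then [:: (0, i.+1 %% n); (0, (i + n.-1) %% n); (1, i)]
  else if l == 1 then [:: (1, i.+1 %% n); (1, (i + n.-1) %% n); (0, i); (2, i)]
  else [:: (1, i)].

Lemma predmod n i j : j < n -> i = j.+1 %% n -> j = (i + n.-1) %% n.
Proof.
move=> jn ->; case: (ltnP j.+1 n) => h.
  rewrite (modn_small h) addSn -addnS prednK ?(leq_ltn_trans _ jn) //.
  by rewrite modnDr modn_small.
have e : j.+1 = n by apply/eqP; rewrite eqn_leq jn h.
by rewrite e modnn add0n -e /= modn_small.
Qed.

Lemma nbrL n (x y : 'I_3 * 'I_n) : web_adj x y -> (val y.1, val y.2) \in L x.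
Proof.
case: x y => [a b] [a' b'] /=.
rewrite /L /cyc_adj /=.
case/orP => [|/orP [|/orP [|/orP [|]]]].
- case/and3P => /eqP <- ha /orP [] /eqP E.
    by case: a ha => [[|[|]] Ha] //= _; rewrite E inE eqxx.
  have E' := predmod (ltn_ord b') E.
  by case: a ha => [[|[|]] Ha] //= _; rewrite -E' !inE eqxx ?orbT.
- by case/and3P => /eqP <- /eqP -> /eqP ->; rewrite /= !inE eqxx ?orbT.
- by case/and3P => /eqP <- /eqP -> /eqP ->; rewrite /= !inE eqxx ?orbT.
- by case/and3P => /eqP <- /eqP -> /eqP ->; rewrite /= !inE eqxx ?orbT.
- by case/and3P => /eqP <- /eqP -> /eqP ->; rewrite /= !inE eqxx ?orbT.
Qed.

Lemma pair_val n (p q : 'I_3 * 'I_n) : (val p.1, val p.2) = (val q.1, val q.2) -> p = q.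
Proof. by case: p q => [a b] [a' b'] /= [/val_inj -> /val_inj ->]. Qed.

Lemma deg_bound n k (c : 'I_3 * 'I_n -> 'I_k) (x : 'I_3 * 'I_n) :
  (forall j : 'I_k, j != c x -> exists y, web_adj x y /\ c y = j) ->
  k.-1 <= size (L x).
Proof.
move=> Hb.
pose g (j : 'I_k) := [pick y | web_adj x y && (c y == j)].
pose h j := if g j is Some y then (val y.1, val y.2) else (0, 0).
have gS j : j != c x -> exists y, g j = Some y /\ web_adj x y /\ c y = j.
  move=> /Hb [y [a b]]; rewrite /g; case: pickP => [z /andP [az /eqP bz]|/(_ y)].
    by exists z.
  by rewrite a b eqxx.
have -> : k.-1 = size [seq h j | j <- enum (predC1 (c x))].
  by rewrite size_map -cardE cardC1 card_ord.
apply: uniq_leq_size.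
  rewrite map_inj_in_uniq ?enum_uniq // => j1 j2.
  rewrite !mem_enum /= => /gS [y1 [e1 [_ c1]]] /gS [y2 [e2 [_ c2]]].
  rewrite /h e1 e2 => E.
  by rewrite -c1 -c2 (pair_val E).
move=> p /mapP [j]; rewrite mem_enum => /gS [y [e [a _]]] ->.
by rewrite /h e; apply: nbrL.
Qed.

Lemma upper5 n k (c : 'I_3 * 'I_n -> 'I_k) : b_colouring (@web_adj n) c -> k <= 5.
Proof.
case: k c => // k c [_ Hb]; case: (Hb ord0) => x [cx Hx].
have := deg_bound (x:=x) (c:=c); rewrite cx => /(_ Hx) /leq_trans; apply.
by rewrite /L; case: (_ == 0) => //; case: (_ == 1).
Qed.

Lemma upper_n n k (c : 'I_3 * 'I_n -> 'I_k) : b_colouring (@web_adj n) c -> 5 <= k -> k <= n.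
Proof.
move=> [_ Hb] k5.
have H1 i : exists x, (c x == i) && (val x.1 == 1).
  case: (Hb i) => x [cx Hx]; exists x; rewrite cx eqxx /=.
  have := deg_bound (x:=x) (c:=c); rewrite cx => /(_ Hx).
  rewrite /L; case: ifP => _; first by rewrite /= -ltnS prednK ?(leq_trans _ k5) // => /(leq_trans k5).
  case: ifP => //= _; rewrite -ltnS prednK ?(leq_trans _ k5) // => /(leq_trans k5).
  done.
pose g i := [pick x | (c x == i) && (val x.1 == 1)].
have gS i : exists x, g i = Some x /\ c x = i /\ val x.1 = 1.
  rewrite /g; case: pickP => [z /andP [/eqP a /eqP b]|H]; first by exists z.
  by case: (H1 i) => y; rewrite H.
pose h i := if g i is Some x then val x.2 else 0.
have -> : k = size [seq h i | i <- enum 'I_k] by rewrite size_map size_enum_ord.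
rewrite -[n](size_iota 0); apply: uniq_leq_size.
  rewrite map_inj_uniq ?enum_uniq // => i1 i2.
  case: (gS i1) (gS i2) => [y1 [e1 [c1 l1]]] [y2 [e2 [c2 l2]]].
  rewrite /h e1 e2 -c1 -c2 => E; congr c; apply: pair_val.
  by rewrite l1 l2 E.
move=> p /mapP [i _ ->]; rewrite /h; case: (gS i) => [y [-> _]].
by rewrite mem_iota /= ltn_ord.
Qed.

Definition Oc j := match j with 0 => 3 | 1 => 0 | 2 => 1 | 3 => 2 | 4 => 3 | 5 => 4
  | _ => if odd j then 2 else 1 end.
Definition Ic j := match j with 0 => 1 | 1 => 2 | 2 => 3 | 3 => 4 | 4 => 0 | 5 => 2
  | _ => if odd j then 4 else 0 end.
Definition Pc j := match j with 1 => 4 | 2 => 4 | 3 => 0 | 4 => 1 | _ => 0 end.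
Definition F l j := match l with 0 => Ic j | 1 => Oc j | _ => Pc j end.

Lemma Flt l j : F l j < 5.
Proof.
case: l => [|[|l]] /=.
- by case: j => [|[|[|[|[|[|j]]]]]] //=; case: (odd j).
- by case: j => [|[|[|[|[|[|j]]]]]] //=; case: (odd j).
- by case: j => [|[|[|[|[|[|j]]]]]].
Qed.

Definition col n (x : 'I_3 * 'I_n) : 'I_5 := Ordinal (Flt (val x.1) (val x.2)).

Lemma Fsucc l i : l < 2 -> F l i != F l i.+1.
Proof.
case: l => [|[|]] // _ /=.
- by case: i => [|[|[|[|[|[|i]]]]]] //=; case: (odd i).
- by case: i => [|[|[|[|[|[|i]]]]]] //=; case: (odd i).
Qed.

Lemma Fwrap l i : l < 2 -> 6 <= i -> F l i != F l 0.
Proof.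
case: l => [|[|]] // _ /=; case: i => [|[|[|[|[|[|i]]]]]] //= _; case: (odd i) => //.
Qed.

Lemma Fspoke i : (F 0 i != F 1 i) && (F 1 i != F 2 i).
Proof. by case: i => [|[|[|[|[|[|i]]]]]] //=; case: (odd i). Qed.

Lemma adjF m l i : l < 2 -> i < 7 + m -> F l i != F l (i.+1 %% (7 + m)).
Proof.
move=> hl hi; case: (ltnP i.+1 (7 + m)) => h.
  by rewrite modn_small // Fsucc.
have e : i.+1 = 7 + m by apply/eqP; rewrite eqn_leq hi h.
by rewrite e modnn Fwrap // -ltnS e.
Qed.

Lemma colneq n (x y : 'I_3 * 'I_n) : F (val x.1) (val x.2) != F (val y.1) (val y.2) -> col x != col y.
Proof. by apply: contra => /eqP /(congr1 val) /= ->. Qed.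

Lemma col_proper m : proper_colouring (@web_adj (7 + m)) (@col _).
Proof.
move=> [a b] [a' b'] /=; rewrite /cyc_adj => H; apply: colneq => /=; move: H.
case/orP => [|/orP [|/orP [|/orP [|]]]].
- case/and3P => /eqP <- ha /orP [] /eqP E.
    by rewrite E adjF.
  by rewrite eq_sym E adjF.
- by case/and3P => /eqP <- /eqP -> /eqP ->; case/andP: (Fspoke b).
- by case/and3P => /eqP <- /eqP -> /eqP ->; rewrite eq_sym; case/andP: (Fspoke b).
- by case/and3P => /eqP <- /eqP -> /eqP ->; case/andP: (Fspoke b).
- by case/and3P => /eqP <- /eqP -> /eqP ->; rewrite eq_sym; case/andP: (Fspoke b).
Qed.

Ltac wit m l j := exists (@Ordinal 3 l isT, @Ordinal (7 + m) j isT); split; [done | apply: val_inj; done].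

Lemma col_b m : b_colouring (@web_adj (7 + m)) (@col _).
Proof.
split; first exact: col_proper.
case=> t Ht; case: t Ht => [|[|[|[|[|t]]]]] Ht //.
- exists (@Ordinal 3 1 isT, @Ordinal (7 + m) 1 isT); split; first by apply: val_inj.
  case=> s Hs; case: s Hs => [|[|[|[|[|s]]]]] Hs // _.
  + wit m 1 2. + wit m 0 1. + wit m 1 0. + wit m 2 1.
- exists (@Ordinal 3 1 isT, @Ordinal (7 + m) 2 isT); split; first by apply: val_inj.
  case=> s Hs; case: s Hs => [|[|[|[|[|s]]]]] Hs // _.
  + wit m 1 1. + wit m 1 3. + wit m 0 2. + wit m 2 2.
- exists (@Ordinal 3 1 isT, @Ordinal (7 + m) 3 isT); split; first by apply: val_inj.
  case=> s Hs; case: s Hs => [|[|[|[|[|s]]]]] Hs // _.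
  + wit m 2 3. + wit m 1 2. + wit m 1 4. + wit m 0 3.
- exists (@Ordinal 3 1 isT, @Ordinal (7 + m) 4 isT); split; first by apply: val_inj.
  case=> s Hs; case: s Hs => [|[|[|[|[|s]]]]] Hs // _.
  + wit m 0 4. + wit m 2 4. + wit m 1 3. + wit m 1 5.
- exists (@Ordinal 3 1 isT, @Ordinal (7 + m) 5 isT); split; first by apply: val_inj.
  case=> s Hs; case: s Hs => [|[|[|[|[|s]]]]] Hs // _.
  + wit m 2 5. + wit m 1 6. + wit m 0 5. + wit m 1 4.
Qed.
Lemma c4 : has_b_colouring (@web_adj 4) 4.
Proof. exists (tcol 3 [:: [:: 1;2;1;0]; [:: 3;1;0;2]; [:: 0;3;3;1]] (n:=4)). apply: b_colbP. vm_compute. reflexivity. Qed.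
Lemma c5 : has_b_colouring (@web_adj 5) 5.
Proof. exists (tcol 4 [:: [:: 2;3;4;0;1]; [:: 0;1;2;3;4]; [:: 3;4;0;1;2]] (n:=5)). apply: b_colbP. vm_compute. reflexivity. Qed.

Lemma bound n k : has_b_colouring (@web_adj n) k -> k <= (if n <= 4 then 4 else 5).
Proof.
move=> [c Hc]; have h5 := upper5 Hc.
case: ifP => // hn; case: (ltnP k 5) => // k5.
by have := leq_trans (upper_n Hc k5) hn; rewrite leqNgt (leq_trans _ k5).
Qed.

Theorem theorem2p19 (n : nat) : 3 <= n ->
  b_chromatic_number_is (@web_adj n) (if n <= 4 then 4 else 5).
Proof.
move=> n3; split; last by move=> k'; apply: bound.
case: n n3 => [|[|[|[|[|[|[|m]]]]]]] // _.
- exact: c3.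
- exact: c4.
- exact: c5.
- exact: c6.
- by exists (@col (7 + m)); apply: col_b.
Qed.
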